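(* Let $k$ be a field, $S=k[x_1,\dots,x_n]$, $\mathfrak m=(x_1,\dots,x_n)$, $I=(f_1,\dots,f_r)$ a linearly presented $\mathfrak m$-primary ideal, $B=k[T_1,\dots,T_r]$, $J\subseteq B[x_1,\dots,x_n]$ the defining ideal of $\mathrm{Sym}(I)$ with minimal generators $L_1,\dots,L_N$, and $\Theta$ the Jacobian dual ($N\times n$ matrix of linear forms in the $T$'s with $\Theta(x_1,\dots,x_n)^T=(L_1,\dots,L_N)^T$). Let $N'$ be the $(n-1)\times n$ submatrix of $\Theta$ consisting of the rows corresponding to $L_{i_1},\dots,L_{i_{n-1}}$, and for $1\le i\le n$ let $\Delta_i=(-1)^i\det N'^{(i)}$, where $N'^{(i)}$ is $N'$ with its $i$-th column deleted. If $\Delta_i\ne0$ for some $i$, then (1) $\Delta_iJ\subseteq(L_{i_1},\dots,L_{i_{n-1}})+I_n(\Theta)B[x_1,\dots,x_n]$; (2) in the ring $B[x_1,\dots,x_n]$ localized by inverting $\Delta_i$, the ideal generated by $L_{i_1},\dots,L_{i_{n-1}}$ equals the ideal generated by the $2\times 2$ minors of $\begin{bmatrix}x_1&\cdots&x_n\\ \Delta_1&\cdots&\Delta_n\end{bmatrix}$.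
   Context: ''Linearly presented'' means $I$ is generated by forms of a common degree whose syzygy module is generated by linear syzygies $\sum_i a_i(\mathbf x)f_i=0$; $J$ is generated by the bilinear forms $\sum_i a_i(\mathbf x)T_i$ attached to these syzygies, and $L_1,\dots,L_N$ are minimal generators of $J$ (corresponding to minimal generators of the syzygy module). $I_n(\Theta)\subseteq B$ is the ideal of $n\times n$ minors of $\Theta$. *)

(* Defs.v *)
From HB Require Import structures.
From mathcomp Require Import all_boot all_order all_algebra.
From mathcomp Require Import fraction.
From mathcomp.multinomials Require Import mpoly.
Set Implicit Arguments. Unset Strict Implicit. Unset Printing Implicit Defensive.
Import Order.TTheory GRing.Theory.
Local Open Scope ring_scope.
Local Notation "x %:F" := (@FracField.tofrac _ x) : ring_scope.

Inductive ideal_in (R : comNzRingType) (A : R -> Prop) (G : R -> Prop) : R -> Prop :=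
  | ideal_in_gen g : G g -> ideal_in A G g
  | ideal_in_0 : ideal_in A G 0
  | ideal_in_add a b : ideal_in A G a -> ideal_in A G b -> ideal_in A G (a + b)
  | ideal_in_mul c a : A c -> ideal_in A G a -> ideal_in A G (c * a).

Definition ideal_gen (R : comNzRingType) (G : R -> Prop) : R -> Prop :=
  ideal_in (fun _ => True) G.

(* The localization R_d = R[1/d] of a domain R, realized inside Frac(R). *)
Definition loc_ring (R : idomainType) (d : R) : {fraction R} -> Prop :=
  fun z => exists (a : R) (t : nat), z = a%:F / (d ^+ t)%:F.

Definition loc_ideal (R : idomainType) (d : R) (G : R -> Prop) : {fraction R} -> Prop :=
  ideal_in (loc_ring d) (fun z => exists2 g, G g & z = g%:F).

Definition max_homog (k : fieldType) (n : nat) : {mpoly k[n]} -> Prop :=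
  ideal_gen (fun p => exists i : 'I_n, p = 'X_i).

Definition m_primary (k : fieldType) (n : nat) (I : {mpoly k[n]} -> Prop) : Prop :=
  [/\ ~ I 1,
      (forall a b, I (a * b) -> I a \/ exists e : nat, I (b ^+ e)) &
      (forall g, (exists e : nat, I (g ^+ e)) <-> max_homog g)].

Definition syzygy (k : fieldType) (n r : nat) (f : 'I_r -> {mpoly k[n]})
  (a : 'I_r -> {mpoly k[n]}) : Prop := \sum_(i < r) a i * f i = 0.

Definition linear_syzygy (k : fieldType) (n r : nat) (f : 'I_r -> {mpoly k[n]})
  (a : 'I_r -> {mpoly k[n]}) : Prop :=
  syzygy f a /\ forall i, a i \is 1.-homog.

Definition gens_syz (k : fieldType) (n r N : nat) (f : 'I_r -> {mpoly k[n]})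
  (A : 'I_N -> 'I_r -> {mpoly k[n]}) : Prop :=
  (forall j, syzygy f (A j)) /\
  forall a, syzygy f a ->
    exists c : 'I_N -> {mpoly k[n]}, forall i, a i = \sum_(j < N) c j * A j i.

Definition min_gens_syz (k : fieldType) (n r N : nat) (f : 'I_r -> {mpoly k[n]})
  (A : 'I_N -> 'I_r -> {mpoly k[n]}) : Prop :=
  gens_syz f A /\
  forall j0 : 'I_N, ~ (forall a, syzygy f a ->
    exists c : 'I_N -> {mpoly k[n]}, c j0 = 0 /\ forall i, a i = \sum_(j < N) c j * A j i).

Definition linearly_presented (k : fieldType) (n r : nat) (f : 'I_r -> {mpoly k[n]}) : Prop :=
  (exists d : nat, forall i, f i \is d.-homog) /\
  exists (M : nat) (A : 'I_M -> 'I_r -> {mpoly k[n]}),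
    (forall j, linear_syzygy f (A j)) /\ gens_syz f A.

(* The embedding S = k[x] -> B[x], B = k[T_1..T_r]. *)
Definition toBX (k : fieldType) (n r : nat) (p : {mpoly k[n]}) : {mpoly {mpoly k[r]}[n]} :=
  map_mpoly (mpolyC r (R := k)) p.

Definition bilin (k : fieldType) (n r : nat) (a : 'I_r -> {mpoly k[n]}) : {mpoly {mpoly k[r]}[n]} :=
  \sum_(i < r) toBX r (a i) * ('X_i : {mpoly k[r]})%:MP.

(* J : the defining ideal of Sym(I), generated by the bilinear forms of   *)
(* the linear syzygies.                                                   *)
Definition sym_ideal (k : fieldType) (n r : nat) (f : 'I_r -> {mpoly k[n]}) :
  {mpoly {mpoly k[r]}[n]} -> Prop :=
  ideal_gen (fun p => exists2 a, linear_syzygy f a & p = bilin a).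

Definition minors_ideal (R : comNzRingType) (N n : nat) (Th : 'M[R]_(N, n)) : R -> Prop :=
  ideal_gen (fun p => exists2 s : 'I_n -> 'I_N, injective s &
                        p = \det (\matrix_(a < n, b < n) Th (s a) b)).

(* Delta_i = (-1)^i det N'^(i) for the 1-based index i; here i : 'I_n is  *)
(* 0-based, so the sign is (-1)^(i+1). N' consists of rows sel 0..n-2.    *)
Definition Delta (R : comNzRingType) (N n : nat) (Th : 'M[R]_(N, n))
  (sel : 'I_n.-1 -> 'I_N) (i : 'I_n) : R :=
  (-1) ^+ (i.+1) * \det (\matrix_(a < n.-1, b < n.-1) Th (sel a) (lift i b)).

(* Main.v *)
Require Import Defs.
From HB Require Import structures.
From mathcomp Require Import all_boot all_order all_algebra.
From mathcomp Require Import fraction.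
From mathcomp.multinomials Require Import mpoly.
From mathcomp Require Import ring.
Import GRing.Theory.
Local Open Scope ring_scope.
Set Implicit Arguments.

Section Gen.
Variable R : comNzRingType.

Lemma ideal_sub (A : R -> Prop) (G G' : R -> Prop) z :
  (forall g, G g -> ideal_in A G' g) -> ideal_in A G z -> ideal_in A G' z.
Proof.
move=> H; elim.
- exact: H.
- exact: ideal_in_0.
- by move=> *; apply: ideal_in_add.
- by move=> *; apply: ideal_in_mul.
Qed.

Lemma ig_mul (G : R -> Prop) c z : ideal_gen G z -> ideal_gen G (c * z).
Proof. by move=> h; apply: ideal_in_mul. Qed.

Lemma ig_opp (G : R -> Prop) z : ideal_gen G z -> ideal_gen G (- z).
Proof. by move=> h; rewrite -mulN1r; apply: ig_mul. Qed.

Lemma ig_add (G : R -> Prop) y z : ideal_gen G y -> ideal_gen G z -> ideal_gen G (y + z).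
Proof. by move=> *; apply: ideal_in_add. Qed.

Lemma ig_sub (G : R -> Prop) y z : ideal_gen G y -> ideal_gen G z -> ideal_gen G (y - z).
Proof. by move=> *; apply: ig_add => //; apply: ig_opp. Qed.

Lemma ig_sum (G : R -> Prop) (I : finType) (F : I -> R) :
  (forall i, ideal_gen G (F i)) -> ideal_gen G (\sum_i F i).
Proof.
move=> h; apply: big_ind => //; first exact: ideal_in_0.
by move=> *; apply: ig_add.
Qed.

Lemma sign_sq n : (-1) ^+ n * (-1) ^+ n = 1 :> R.
Proof. by rewrite -expr2 sqrr_sign. Qed.

Variables (N m : nat) (P : 'M[R]_(N, m.+1)) (sel : 'I_m -> 'I_N).

Definition Qm (v : 'I_m.+1 -> R) : 'M[R]_m.+1 :=
  \matrix_(a, b) if unlift ord_max a is Some a' then P (sel a') b else v b.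

Lemma cofQ v l : cofactor (Qm v) ord_max l = (-1) ^+ m.+1 * Delta P sel l.
Proof.
rewrite /cofactor /Delta.
have -> : row' ord_max (col' l (Qm v)) = \matrix_(a < m, b < m) P (sel a) (lift l b).
  by apply/matrixP=> a b; rewrite !mxE liftK.
by rewrite mulrA -exprD addSn addnS !exprS !mulN1r opprK.
Qed.

Lemma detQ v : \det (Qm v) = (-1) ^+ m.+1 * \sum_l v l * Delta P sel l.
Proof.
rewrite (expand_det_row _ ord_max) mulr_sumr; apply: eq_bigr => l _.
by rewrite cofQ mxE unlift_none mulrCA.
Qed.

Lemma rowDelta a : \sum_l P (sel a) l * Delta P sel l = 0.
Proof.
have := detQ (fun b => P (sel a) b).
rewrite (@determinant_alternate _ _ _ (lift ord_max a) ord_max).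
- move=> H; rewrite -[LHS]mul1r -(sign_sq m.+1) -mulrA -H mulr0 //.
- by rewrite eq_sym neq_lift.
- by move=> b; rewrite !mxE liftK unlift_none.
Qed.

Lemma widen_lift (a : 'I_m) : widen_ord (leqnSn m) a = lift ord_max a.
Proof. by apply: val_inj; rewrite /= /bump leqNgt ltn_ord. Qed.

Lemma keyid (x : 'I_m.+1 -> R) (i l : 'I_m.+1) : exists c : 'I_m -> R,
  Delta P sel i * x l - Delta P sel l * x i
    = \sum_a c a * \sum_b P (sel a) b * x b.
Proof.
set Q := Qm (fun b => (b == i)%:R).
exists (fun a => (-1) ^+ m.+1 * \adj Q l (lift ord_max a)).
have E : \sum_k \adj Q l k * \sum_b Q k b * x b = \det Q * x l.
  transitivity (\sum_b (\adj Q *m Q) l b * x b).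
    under eq_bigr do rewrite mulr_sumr.
    rewrite exchange_big; apply: eq_bigr => b _.
    rewrite mxE mulr_suml; apply: eq_bigr => k _; by rewrite mulrA.
  rewrite mul_adj_mx (bigD1 l) //= !mxE eqxx mulr1n big1 ?addr0 //.
  by move=> b /negbTE nb; rewrite mxE eq_sym nb mulr0n mul0r.
rewrite big_ord_recr /= in E.
have E1 : \sum_b Q ord_max b * x b = x i.
  rewrite (bigD1 i) //= big1 ?addr0; first by rewrite mxE unlift_none eqxx mul1r.
  by move=> b /negbTE nb; rewrite mxE unlift_none nb mul0r.
have E2 : forall a : 'I_m, \sum_b Q (widen_ord (leqnSn m) a) b * x b
                          = \sum_b P (sel a) b * x b.
  by move=> a; apply: eq_bigr => b _; rewrite widen_lift mxE liftK.
have E3 : \adj Q l ord_max = (-1) ^+ m.+1 * Delta P sel l by rewrite mxE cofQ.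
have E4 : \det Q = (-1) ^+ m.+1 * Delta P sel i.
  rewrite detQ (bigD1 i) //= big1 ?addr0; first by rewrite eqxx mul1r.
  by move=> b /negbTE nb; rewrite nb mul0r.
rewrite E1 E3 E4 in E.
rewrite (eq_bigr (fun a => \adj Q l (lift ord_max a) * \sum_b P (sel a) b * x b)) in E;
  last by move=> a _; rewrite E2 widen_lift.
under [RHS]eq_bigr do rewrite -mulrA.
rewrite -mulr_sumr.
move/(canRL (addrK _)): E => ->.
rewrite mulrBr !mulrA sign_sq !mul1r.
by [].
Qed.

End Gen.
Unset Implicit Arguments.
Local Notation "x %:F" := (@FracField.tofrac _ x) : ring_scope.

Lemma part1 (R : comNzRingType) m N (P : 'M[R]_(N, m.+1)) (sel : 'I_m -> 'I_N)
  (i : 'I_m.+1) (x D : 'I_m.+1 -> R) (Lj : 'I_N -> R) (Mq : R -> Prop) :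
  (forall l, D l = Delta P sel l) -> (forall j, Lj j = \sum_b P j b * x b) ->
  (forall s : 'I_m.+1 -> 'I_N, injective s -> Mq (\det (\matrix_(a, b) P (s a) b))) ->
  forall j, ideal_gen (fun p => (exists a, p = Lj (sel a)) \/ Mq p) (D i * Lj j).
Proof.
move=> hD hL hM j.
have -> : D i * Lj j = \sum_b P j b * (D i * x b - D b * x i)
                       + x i * \sum_b P j b * D b.
  rewrite hL mulr_sumr mulr_sumr -big_split; apply: eq_bigr => b _ /=; ring.
apply: ig_add.
  apply: ig_sum => b; apply: ig_mul.
  rewrite !hD; have [c ->] := keyid _ P sel x i b.
  apply: ig_sum => a; apply: ig_mul; apply: ideal_in_gen.
  by left; exists a; rewrite hL.
apply: ig_mul.
set s := fun a : 'I_m.+1 => if unlift ord_max a is Some a' then sel a' else j.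
have hQ : Qm _ P sel (fun b => P j b) = \matrix_(a, b) P (s a) b.
  by apply/matrixP => a b; rewrite !mxE /s; case: (unlift ord_max a).
have hS : \sum_b P j b * D b = (-1) ^+ m.+1 * \det (Qm _ P sel (fun b => P j b)).
  rewrite detQ mulrA sign_sq mul1r; apply: eq_bigr => b _; by rewrite hD.
rewrite hS hQ; apply: ig_mul.
case: (boolP [forall a1, forall a2, (s a1 == s a2) ==> (a1 == a2)]).
  move/forallP => h; apply: ideal_in_gen; right; apply: hM.
  by move=> a1 a2 e; apply/eqP; move/forallP: (h a1) => /(_ a2) /implyP; apply; rewrite e.
move/forallPn => [a1 /forallPn [a2]]; rewrite negb_imply => /andP [/eqP e ne].
rewrite (determinant_alternate ne); first exact: ideal_in_0.
by move=> b; rewrite !mxE e.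
Qed.

Lemma lift_ideal (R : idomainType) (d : R) (G : R -> Prop) y :
  ideal_gen G y -> loc_ideal d G (y%:F).
Proof.
elim.
- by move=> g Gg; apply: ideal_in_gen; exists g.
- rewrite tofrac0; exact: ideal_in_0.
- by move=> a b _ ha _ hb; rewrite tofracD; apply: ideal_in_add.
- move=> c a _ _ ha; rewrite tofracM; apply: ideal_in_mul => //.
  by exists c, 0%N; rewrite expr0 tofrac1 divr1.
Qed.

Lemma div_step (R : idomainType) (d : R) (G : R -> Prop) y : d != 0 ->
  ideal_gen G (d * y) -> loc_ideal d G (y%:F).
Proof.
move=> nd h0; have h := lift_ideal _ d _ _ h0.
have -> : y%:F = (1%:F / (d ^+ 1)%:F) * (d * y)%:F.
  by rewrite tofracM tofrac1 mul1r expr1 mulrA mulVf ?mul1r // tofrac_eq0.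
apply: ideal_in_mul => //; by exists 1, 1%N.
Qed.

Lemma part2 (R : idomainType) m N (P : 'M[R]_(N, m.+1)) (sel : 'I_m -> 'I_N)
  (i : 'I_m.+1) (x D : 'I_m.+1 -> R) (Lsel : 'I_m -> R) :
  (forall l, D l = Delta P sel l) -> (forall a, Lsel a = \sum_b P (sel a) b * x b) ->
  D i != 0 ->
  forall z, loc_ideal (D i) (fun p => exists a, p = Lsel a) z <->
    loc_ideal (D i) (fun p => exists a b : 'I_m.+1, (a < b)%N /\
                                p = x a * D b - x b * D a) z.
Proof.
move=> hD hL nD.
set G2 := (fun p => exists a b : 'I_m.+1, (a < b)%N /\ p = x a * D b - x b * D a).
set G1 := (fun p => exists a, p = Lsel a).
have pairG2 : forall a b, ideal_gen G2 (x a * D b - x b * D a).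
  move=> a b; case: (ltngtP a b) => hab.
  - by apply: ideal_in_gen; exists a, b.
  - rewrite -opprB; apply: ig_opp; apply: ideal_in_gen; by exists b, a.
  - have -> : a = b by apply: val_inj.
    by rewrite subrr; exact: ideal_in_0.
have keyG1 : forall l, ideal_gen G1 (D i * x l - D l * x i).
  move=> l; rewrite !hD; have [c ->] := keyid _ P sel x i l.
  by apply: ig_sum => a; apply: ig_mul; apply: ideal_in_gen; exists a; rewrite hL.
move=> z; split; apply: ideal_sub => _ [g hg ->].
- apply: div_step => //; case: hg => a ->.
  have -> : D i * Lsel a = \sum_b P (sel a) b * (x b * D i - x i * D b)
                           + x i * \sum_b P (sel a) b * D b.
    rewrite hL mulr_sumr mulr_sumr -big_split; apply: eq_bigr => b _ /=; ring.
  have -> : \sum_b P (sel a) b * D b = 0.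
    rewrite (eq_bigr (fun b => P (sel a) b * Delta P sel b)); first exact: rowDelta.
    by move=> b _; rewrite hD.
  rewrite mulr0 addr0; apply: ig_sum => b; apply: ig_mul; exact: pairG2.
- apply: div_step => //; case: hg => a [b [_ ->]].
  have -> : D i * (x a * D b - x b * D a)
            = D b * (D i * x a - D a * x i) - D a * (D i * x b - D b * x i) by ring.
  by apply: ig_sub; apply: ig_mul.
Qed.

Lemma comb_gen (S T : comNzRingType) (phi : {rmorphism S -> T}) (r N : nat)
  (A : 'I_N -> 'I_r -> S) (a : 'I_r -> S) (c : 'I_N -> S) (t : 'I_r -> T) :
  (forall l, a l = \sum_j c j * A j l) ->
  \sum_l phi (a l) * t l = \sum_j phi (c j) * \sum_l phi (A j l) * t l.
Proof.
move=> hc.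
rewrite (eq_bigr (fun l => \sum_j phi (c j) * (phi (A j l) * t l))); last first.
  by move=> l _; rewrite hc rmorph_sum mulr_suml; apply: eq_bigr => j _; rewrite rmorphM mulrA.
rewrite exchange_big; apply: eq_bigr => j _; by rewrite mulr_sumr.
Qed.

Lemma bilin_comb (k : fieldType) n r N (A : 'I_N -> 'I_r -> {mpoly k[n]})
  (a : 'I_r -> {mpoly k[n]}) (c' : 'I_N -> {mpoly k[n]}) :
  (forall l, a l = \sum_j c' j * A j l) -> bilin a = \sum_j toBX r (c' j) * bilin (A j).
Proof.
move=> hc.
have H := comb_gen _ _ (map_mpoly (mpolyC r (R:=k))) r N A a c' (fun l => ('X_l : {mpoly k[r]})%:MP) hc.
exact_no_check H.
Qed.

Lemma ig_comb (R : comNzRingType) (G : R -> Prop) N d (u v : 'I_N -> R) :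
  (forall j, ideal_gen G (d * v j)) -> ideal_gen G (d * \sum_j u j * v j).
Proof.
move=> h; rewrite mulr_sumr; apply: ig_sum => j; rewrite mulrCA; exact: ig_mul.
Qed.

Lemma sym_step (R : comNzRingType) (G H : R -> Prop) d z :
  (forall g, H g -> ideal_gen G (d * g)) -> ideal_gen H z -> ideal_gen G (d * z).
Proof.
move=> h; elim.
- exact: h.
- rewrite mulr0; exact: ideal_in_0.
- by move=> a b _ ha _ hb; rewrite mulrDr; apply: ig_add.
- by move=> c a _ _ ha; rewrite mulrCA; apply: ig_mul.
Qed.

Lemma main_m
  (k : fieldType) (m r N : nat)
  (f : 'I_r -> {mpoly k[m.+1]})
  (A : 'I_N -> 'I_r -> {mpoly k[m.+1]})
  (L : 'I_N -> {mpoly {mpoly k[r]}[m.+1]})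
  (Theta : 'M[{mpoly k[r]}]_(N, m.+1))
  (sel : 'I_m -> 'I_N) (i : 'I_m.+1) :
  min_gens_syz f A ->
  (forall j, L j = bilin (A j)) ->
  (forall j, \sum_(l < m.+1) (Theta j l)%:MP * 'X_l = L j) ->
  Delta Theta sel i != 0 ->
  (forall z, sym_ideal f z ->
     ideal_gen (fun p => (exists a, p = L (sel a)) \/
                         exists2 q, minors_ideal Theta q & p = q%:MP)
               ((Delta Theta sel i)%:MP * z))
  /\
  (forall z : {fraction {mpoly {mpoly k[r]}[m.+1]}},
     loc_ideal (Delta Theta sel i)%:MP (fun p => exists a, p = L (sel a)) z
     <->
     loc_ideal (Delta Theta sel i)%:MP
       (fun p => exists a b : 'I_m.+1, (a < b)%N /\
          p = 'X_a * (Delta Theta sel b)%:MP - 'X_b * (Delta Theta sel a)%:MP) z).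
Proof.
move=> hmin hLA hTh hD0.
pose Rr := {mpoly {mpoly k[r]}[m.+1]}.
pose P := map_mx (fun t : {mpoly k[r]} => (t%:MP : Rr)) Theta.
have hD : forall l, (Delta Theta sel l)%:MP = Delta P sel l :> Rr.
  move=> l; rewrite /Delta rmorphM rmorphXn rmorphN1 -(det_map_mx (@mpolyC _ _)).
  by congr (_ * \det _); apply/matrixP => a b; rewrite !mxE.
have hL : forall j, L j = \sum_b P j b * 'X_b.
  by move=> j; rewrite -hTh; apply: eq_bigr => b _; rewrite mxE.
have nD : (Delta Theta sel i)%:MP != 0 :> Rr by rewrite mpolyC_eq0.
have hM : forall s : 'I_m.+1 -> 'I_N, injective s ->
    (fun p => exists2 q, minors_ideal Theta q & p = q%:MP) (\det (\matrix_(a, b) P (s a) b)).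
  move=> s hs; exists (\det (\matrix_(a, b) Theta (s a) b)).
    by apply: ideal_in_gen; exists s.
  rewrite -(det_map_mx (@mpolyC _ _)).
  by congr (\det _); apply/matrixP => a b; rewrite !mxE.
split; last first.
  match goal with |- forall z, @loc_ideal ?RR ?d ?G1 z <-> @loc_ideal _ _ ?G2 z =>
  have H2 := part2 RR _ _ P sel i (fun l => 'X_l) (fun l => (Delta Theta sel l)%:MP)
            (fun a => L (sel a)) end.
  match type of H2 with ?A1 -> ?A2 -> ?A3 -> _ =>
    assert (p1 : A1) by exact_no_check hD;
    assert (p2 : A2) by exact_no_check (fun a => hL (sel a));
    assert (p3 : A3) by exact_no_check nD end.
  exact_no_check (H2 p1 p2 p3).
match goal with |- forall z, sym_ideal f z -> @ideal_gen ?CR _ _ =>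
  have H1 := part1 CR _ _ P sel i (fun l => 'X_l) (fun l => (Delta Theta sel l)%:MP)
            L (fun p => exists2 q, minors_ideal Theta q & p = q%:MP) end.
match type of H1 with ?A1 -> ?A2 -> ?A3 -> _ =>
  assert (p1 : A1) by exact_no_check hD;
  assert (p2 : A2) by exact_no_check hL;
  assert (p3 : A3) by exact_no_check hM end.
have hP1 := H1 p1 p2 p3.
move=> z; rewrite /sym_ideal; apply: sym_step => _ [a ha ->].
have [c hc] := (hmin.1).2 a ha.1.
rewrite (bilin_comb _ _ _ _ A a c hc).
apply: ig_comb => j; rewrite -hLA; exact_no_check (hP1 j).
Qed.

Theorem corollary2p10
  (k : fieldType) (n r N : nat)
  (f : 'I_r -> {mpoly k[n]})
  (A : 'I_N -> 'I_r -> {mpoly k[n]})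
  (L : 'I_N -> {mpoly {mpoly k[r]}[n]})
  (Theta : 'M[{mpoly k[r]}]_(N, n))
  (sel : 'I_n.-1 -> 'I_N) (i : 'I_n) :
  linearly_presented f ->
  m_primary (ideal_gen (fun p => exists j : 'I_r, p = f j)) ->
  (forall j, linear_syzygy f (A j)) ->
  min_gens_syz f A ->
  (forall j, L j = bilin (A j)) ->
  (forall j l, Theta j l \is 1.-homog) ->
  (forall j, \sum_(l < n) (Theta j l)%:MP * 'X_l = L j) ->
  Delta Theta sel i != 0 ->
  (forall z, sym_ideal f z ->
     ideal_gen (fun p => (exists a, p = L (sel a)) \/
                         exists2 q, minors_ideal Theta q & p = q%:MP)
               ((Delta Theta sel i)%:MP * z))
  /\
  (forall z : {fraction {mpoly {mpoly k[r]}[n]}},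
     loc_ideal (Delta Theta sel i)%:MP (fun p => exists a, p = L (sel a)) z
     <->
     loc_ideal (Delta Theta sel i)%:MP
       (fun p => exists a b : 'I_n, (a < b)%N /\
          p = 'X_a * (Delta Theta sel b)%:MP - 'X_b * (Delta Theta sel a)%:MP) z).
Proof.
move=> _ _ _ hmin hLA _ hTh hD0.
move: f A L Theta sel i hmin hLA hTh hD0.
case: n => [|m] f A L Theta sel i; first by case: i.
exact: main_m.
Qed.
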